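(* Let $M$ be a finite abelian group of order $m$, $J$ a Jacobi function on $M$, $c\in\hat{M}$ with $c^2=1$, and $i\colon\hat{M}\setminus\{c\}\to\hat{M}\setminus\{1\}$ a bijection with $i(x)=x\,i(x^{-1})$ for all $x\ne c$, such that $J(\alpha,\beta)=\frac{1}{m}\sum_{x\in\hat{M}\setminus\{c\}}\alpha(i(x))\beta(i(x)x^{-1})$ for all $\alpha,\beta\in M$. Let $F=\hat{M}\sqcup\{0\}$ with the operation $\oplus$ for which $0$ is the identity and, for $x,y\ne0$, $x\oplus y=0$ if $x=cy$ and $x\oplus y=x\,i(x/y)^{-1}$ otherwise. Then for all $\alpha,\beta,\gamma\in M$, \[ \sum_{\substack{(x\oplus y)\oplus z=1,\\ x,y,z\in F\setminus\{0\}}}\alpha(x)\beta(y)\gamma(z)=\sum_{\substack{x\oplus(y\oplus z)=1,\\ x,y,z\in F\setminus\{0\}}}\alpha(x)\beta(y)\gamma(z). \]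
   Context: $\hat{M}$ is the Pontryagin dual of $M$, written multiplicatively with identity $1$; for $\alpha\in M$, $x\in\hat{M}$, $\alpha(x)$ is the value of the character $x$ at $\alpha$. $\delta(\alpha)=1$ if $\alpha$ is the identity of $M$ and $0$ otherwise. A Jacobi function on $M$ is a function $J\colon M\times M\to\mathbf{C}$ satisfying: (A) $J(\alpha,\beta)=J(\beta,\alpha)$; (B) with $J^*(\alpha,\beta)=-\delta(\alpha)-\delta(\beta)+J(\alpha,\beta)$, $J^*(\alpha,\beta)J^*(\alpha\beta,\gamma)=J^*(\alpha,\beta\gamma)J^*(\beta,\gamma)$; (C) $\sum_{\beta\in M}J(\alpha_1\beta,\alpha_2\beta^{-1})J(\alpha_3\beta,\alpha_4\beta^{-1})=J(\alpha_1\alpha_4,\alpha_2\alpha_3)$; all for all elements of $M$. *)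

(* Defs.v *)
From HB Require Import structures.
From mathcomp Require Import all_boot all_order all_algebra all_fingroup all_solvable all_field all_character.
Set Implicit Arguments. Unset Strict Implicit. Unset Printing Implicit Defensive.
Import Order.TTheory GRing.Theory Num.Theory.
Local Open Scope ring_scope.

(* M is the (abelian) finite group [set: gT]; its Pontryagin dual \hat M is
   realised as the finite type Iirr [set: gT] of irreducible (= linear, since M
   is abelian) complex characters of M, with values in algC. *)

Section Dual.
Variable gT : finGroupType.

Definition Dual := Iirr [set: gT]%G.

(* alpha(x) : value of the character x at alpha *)
Definition ev (x : Dual) (alpha : gT) : algC := 'chi_x alpha.

Definition dmul (x y : Dual) : Dual := cfIirr ('chi_x * 'chi_y)%R.
Definition dinv (x : Dual) : Dual := conjC_Iirr x.
Definition d1 : Dual := 0.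

Definition delta (a : gT) : algC := (a == 1%g)%:R.

Definition Jstar (J : gT -> gT -> algC) (a b : gT) : algC :=
  - delta a - delta b + J a b.

Definition is_Jacobi (J : gT -> gT -> algC) : Prop :=
  [/\ (forall a b, J a b = J b a),
      (forall a b g, Jstar J a b * Jstar J (a * b)%g g
                     = Jstar J a (b * g)%g * Jstar J b g) &
      (forall a1 a2 a3 a4,
          \sum_(b : gT) J (a1 * b)%g (a2 * b^-1)%g * J (a3 * b)%g (a4 * b^-1)%g
          = J (a1 * a4)%g (a2 * a3)%g)].

(* F = \hat M disjoint-union {0}, with None playing the role of 0. *)
Definition oplus (c : Dual) (i : Dual -> Dual) (u v : option Dual) : option Dual :=
  match u, v with
  | None, _ => v
  | _, None => u
  | Some x, Some y =>
      if x == dmul c y then None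
      else Some (dmul x (dinv (i (dmul x (dinv y)))))
  end.

End Dual.

(* Main.v *)
Require Import Defs.
From HB Require Import structures.
From mathcomp Require Import all_boot all_order all_algebra all_fingroup all_solvable all_field all_character.
From mathcomp Require Import ring.
Set Implicit Arguments. Unset Strict Implicit. Unset Printing Implicit Defensive.
Import Order.TTheory GRing.Theory Num.Theory.
Local Open Scope ring_scope.
Section DualLemmas.
Variable gT : finGroupType.
Implicit Types (x y z : Dual gT) (a b : gT).
Hypothesis Mab : abelian [set: gT].

Lemma lin (x : Dual gT) : 'chi_x \is a linear_char.
Proof. exact: (char_abelianP _ Mab). Qed.

Lemma ev_dmul x y a : ev (dmul x y) a = ev x a * ev y a.
Proof. by rewrite /ev /dmul cfIirrE ?cfunE // mul_lin_irr ?lin ?mem_irr. Qed.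

Lemma ev_neq0 x a : ev x a != 0.
Proof. by rewrite /ev lin_char_neq0 ?lin ?inE. Qed.

Lemma ev_dinv x a : ev (dinv x) a = (ev x a)^-1.
Proof.
rewrite /ev /dinv conjC_IirrE cfunE -(lin_charV (lin x)) ?inE //.
by rewrite (lin_charV_conj (lin x)) ?inE.
Qed.

Lemma ev_d1 a : ev (d1 gT) a = 1.
Proof. by rewrite /ev /d1 irr0 cfun1E inE. Qed.

Lemma ev_g1 x : ev x 1%g = 1.
Proof. by rewrite /ev lin_char1 ?lin. Qed.

Lemma ev_mulg x a b : ev x (a * b)%g = ev x a * ev x b.
Proof. by rewrite /ev (lin_charM (lin x)) ?inE. Qed.

Lemma ev_invg x a : ev x (a^-1)%g = (ev x a)^-1.
Proof. by rewrite /ev (lin_charV (lin x)) ?inE. Qed.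

Lemma dual_eq x y : (forall a, ev x a = ev y a) -> x = y.
Proof. by move=> H; apply: irr_inj; apply/cfunP => a; apply: H. Qed.

Lemma dmulC x y : dmul x y = dmul y x.
Proof. by apply: dual_eq => a; rewrite !ev_dmul mulrC. Qed.
Lemma dmulA x y z : dmul x (dmul y z) = dmul (dmul x y) z.
Proof. by apply: dual_eq => a; rewrite !ev_dmul mulrA. Qed.
Lemma dmul1 x : dmul (d1 gT) x = x.
Proof. by apply: dual_eq => a; rewrite !ev_dmul ev_d1 mul1r. Qed.
Lemma dmulV x : dmul x (dinv x) = d1 gT.
Proof. by apply: dual_eq => a; rewrite !ev_dmul ev_dinv ev_d1 mulfV ?ev_neq0. Qed.
Lemma dinvK x : dinv (dinv x) = x.
Proof. by apply: dual_eq => a; rewrite !ev_dinv invrK. Qed.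
Lemma dinv_mul x y : dinv (dmul x y) = dmul (dinv x) (dinv y).
Proof. by apply: dual_eq => a; rewrite !(ev_dinv, ev_dmul) invfM. Qed.

Lemma sum_ev a : \sum_(x : Dual gT) ev x a = #|gT|%:R * delta a.
Proof.
have := cfRegE [set: gT]%G a; rewrite cfReg_sum sum_cfunE cardsT /delta.
rewrite mulr_natr => <-; apply: eq_bigr => x _.
by rewrite cfunE lin_char1 ?lin // mul1r.
Qed.

End DualLemmas.

Section ISection.
Variable gT : finGroupType.
Hypothesis Mab : abelian [set: gT].
Implicit Types (x y z w u v t : Dual gT) (a b : gT).
Variable c : Dual gT.
Hypothesis Hc : dmul c c = d1 gT.
Variable i : Dual gT -> Dual gT.
Hypothesis Hi_range : forall x, x != c -> i x != d1 gT.
Hypothesis Hi_inj : {in [pred x | x != c] &, injective i}.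
Hypothesis Hi_surj : forall y, y != d1 gT -> exists2 x, x != c & i x = y.
Hypothesis Hi_sym : forall x, x != c -> i x = dmul x (i (dinv x)).

Lemma cinv : dinv c = c.
Proof.
apply: dual_eq => a; rewrite ev_dinv //.
have H : ev c a * ev c a = 1 by rewrite -ev_dmul // Hc ev_d1.
by apply: (mulIf (ev_neq0 Mab c a)); rewrite mulVf ?ev_neq0 // H.
Qed.

Lemma evc_inv a : ev c (a^-1)%g = ev c a.
Proof.
by rewrite ev_invg // -ev_dinv // cinv.
Qed.

Lemma dmulI x : injective (dmul x).
Proof.
move=> y z H; have := congr1 (dmul (dinv x)) H.
by rewrite !dmulA // ![dmul (dinv x) x]dmulC // !dmulV // !dmul1.
Qed.

Lemma dinv_inj : injective (@dinv gT).
Proof. by move=> y z H; rewrite -(dinvK Mab y) H dinvK. Qed.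

Lemma dinv_eqc x : (dinv x == c) = (x == c).
Proof. by rewrite -{1}cinv (inj_eq dinv_inj). Qed.

Lemma sum_i (F : Dual gT -> algC) :
  \sum_(x | x != c) F (i x) = \sum_(y | y != d1 gT) F y.
Proof.
pose h' y := odflt c [pick x | (x != c) && (i x == y)].
have h'K y : y != d1 gT -> i (h' y) = y.
  move=> /Hi_surj [x xc ix]; rewrite /h'; case: pickP => [x' /andP[_ /eqP] //|].
  by move=> /(_ x); rewrite xc ix eqxx.
rewrite (reindex_onto i h' h'K) /=.
apply: eq_bigl => x; case: (eqVneq x c) => [->|xc] /=.
- case: (eqVneq (i c) (d1 gT)) => //= ic1.
  rewrite /h'; case: pickP => [x' /andP[x'c _]|] /=; first by rewrite (negPf x'c).
  by have [x0 xc ix] := Hi_surj ic1; move=> /(_ x0); rewrite xc ix eqxx.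
- rewrite Hi_range //=; rewrite /h'; case: pickP => [x' /andP[x'c /eqP ix']|/(_ x)].
    by apply/esym/eqP; apply: Hi_inj; rewrite ?inE.
  by rewrite xc eqxx.
Qed.


Ltac evs := repeat (rewrite (ev_dmul Mab) || rewrite (ev_dinv Mab) || rewrite ev_d1).
Ltac nz := repeat (apply/andP; split); rewrite ?mulf_neq0 ?invr_neq0 ?ev_neq0 //.
Ltac fld := field; nz.

Lemma divE x y z : (dmul x (dinv y) == z) = (x == dmul z y).
Proof.
apply/eqP/eqP => [<-|->]; apply: dual_eq => a; evs.
all: fld.
Qed.

Lemma dmulCA x y z : dmul x (dmul y z) = dmul y (dmul x z).
Proof. by apply: dual_eq => a; evs; ring. Qed.

Lemma eq_cmul x y : (x == dmul c y) = (y == dmul c x).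
Proof.
by apply/eqP/eqP => ->; rewrite dmulA // Hc dmul1.
Qed.

Lemma dmulKV x y : dmul x (dinv (dmul x (dinv y))) = y.
Proof. by apply: dual_eq => a; evs; fld. Qed.

Lemma dmul1r x : dmul x (d1 gT) = x.
Proof. by rewrite dmulC // dmul1. Qed.

Lemma dinv_div x y : dinv (dmul x (dinv y)) = dmul y (dinv x).
Proof. by apply: dual_eq => a; evs; fld. Qed.

Lemma oplus_comm (u v : option (Dual gT)) : oplus c i u v = oplus c i v u.
Proof.
case: u v => [x|] [y|] //=; rewrite eq_cmul.
case: ifP => // nxy; congr Some.
have t1 : dmul y (dinv x) != c by rewrite divE nxy.
rewrite (Hi_sym t1) dinv_div.
apply: dual_eq => a; evs; fld.
Qed.

Lemma oplus_xy x v : oplus c i (Some x) (Some (dmul x (dinv v))) =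
  if v == c then None else Some (dmul x (dinv (i v))).
Proof.
rewrite /= dmulKV.
have -> : (x == dmul c (dmul x (dinv v))) = (v == c).
  rewrite dmulCA -{1}[x]dmul1r (inj_eq (@dmulI x)) eq_sym divE dmul1 //.
  by rewrite eq_sym.
Qed.


Lemma S_sum w (F : Dual gT -> algC) :
  \sum_(z | oplus c i (Some w) (Some z) == Some (d1 gT)) F z
  = \sum_(u | u != c) (w == i u)%:R * F (dmul (i u) (dinv u)).
Proof.
have hinj : injective (fun t => dmul w (dinv t)).
  by move=> ? ? /dmulI /dinv_inj.
rewrite (reindex_inj hinj) big_mkcond [RHS]big_mkcond.
apply: eq_bigr => t _; rewrite oplus_xy.
case: (eqVneq t c) => [->|tc] //=.
rewrite (inj_eq (@Some_inj _)) divE dmul1 //.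
by case: (eqVneq w (i t)) => [->|] //=; rewrite ?mul1r ?mul0r.
Qed.

Lemma inner_c (F : Dual gT -> algC) :
  \sum_(z | oplus c i None (Some z) == Some (d1 gT)) F z = F (d1 gT).
Proof.
rewrite /=; under eq_bigl do rewrite (inj_eq (@Some_inj _)).
by rewrite big_pred1_eq.
Qed.

Lemma key p q r :
  \sum_(x : Dual gT) \sum_(y : Dual gT) ev x p * ev y q *
     \sum_(z | oplus c i (oplus c i (Some x) (Some y)) (Some z) == Some (d1 gT)) ev z r
  = ev c q * #|gT|%:R * delta (p * q)%g
    + (\sum_(u | u != c) ev (i u) (p * q)%g * ev (dmul (i u) (dinv u)) r)
      * (\sum_(v | v != c) ev (i v) p * ev (dmul (i v) (dinv v)) q).
Proof.
have hinj x : injective (fun t => dmul x (dinv t)).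
  by move=> ? ? /dmulI /dinv_inj.
pose G u := ev (dmul (i u) (dinv u)) r.
transitivity (\sum_(x : Dual gT) \sum_(v : Dual gT) ev x p * ev (dmul x (dinv v)) q *
   (if v == c then 1 else
      \sum_(u | u != c) (dmul x (dinv (i v)) == i u)%:R * G u)).
  apply: eq_bigr => x _; rewrite (reindex_inj (hinj x)); apply: eq_bigr => v _.
  rewrite oplus_xy; case: eqP => _; first by rewrite inner_c ev_d1.
  by rewrite S_sum.
rewrite (eq_bigr (fun x => ev x p * ev (dmul x (dinv c)) q +
   \sum_(v | v != c) ev x p * ev (dmul x (dinv v)) q *
      \sum_(u | u != c) (dmul x (dinv (i v)) == i u)%:R * G u)); last first.
  move=> x _; rewrite (bigD1 c) //= eqxx mulr1; congr (_ + _).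
  by apply: eq_bigr => v /negPf ->.
rewrite big_split /=; congr (_ + _).
  rewrite cinv -mulrA -sum_ev // big_distrr /=; apply: eq_bigr => x _.
  rewrite ev_mulg //; evs; ring.
have coll (X : Dual gT) (H : Dual gT -> algC) :
    \sum_(x : Dual gT) (x == X)%:R * H x = H X.
  rewrite (bigD1 X) //= eqxx mul1r big1 ?addr0 // => x /negPf ->.
  by rewrite mul0r.
transitivity (\sum_(x : Dual gT) \sum_(v | v != c) \sum_(u | u != c)
   (x == dmul (i u) (i v))%:R * (ev x p * ev (dmul x (dinv v)) q * G u)).
  apply: eq_bigr => x _; apply: eq_bigr => v _; rewrite big_distrr.
  by apply: eq_bigr => u _ /=; rewrite divE; ring.
rewrite exchange_big /=; under eq_bigr do rewrite exchange_big /=.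
under eq_bigr do under eq_bigr do rewrite coll.
rewrite big_distrlr exchange_big /=; apply: eq_bigr => v _; apply: eq_bigr => u _.
rewrite /G ev_mulg //; evs; ring.
Qed.

Lemma m_neq0 : (#|gT|%:R : algC) != 0.
Proof. by rewrite pnatr_eq0 -lt0n -cardsT (cardG_gt0 [set: gT]%G). Qed.

Variable J : gT -> gT -> algC.
Hypothesis HJi : forall a b : gT,
      J a b = (#|gT|%:R)^-1 *
        \sum_(x : Dual gT | x != c) ev (i x) a * ev (dmul (i x) (dinv x)) b.

Lemma sumJ (s t : gT) : \sum_(x | x != c) ev (i x) s * ev (dmul (i x) (dinv x)) t
   = #|gT|%:R * J s t.
Proof. by rewrite HJi mulrA mulfV ?mul1r // m_neq0. Qed.

Lemma sum_neq (F : Dual gT -> algC) w :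
  \sum_(x | x != w) F x = \sum_x F x - F w.
Proof. by rewrite [X in _ = X - _](bigD1 w) //=; ring. Qed.

Lemma L1 b : J 1%g b = delta b - (#|gT|%:R)^-1.
Proof.
apply: (mulfI m_neq0); rewrite -sumJ.
transitivity (\sum_(x | x != c) ev (i (dinv x)) b).
  apply: eq_bigr => x xc; rewrite ev_g1 // mul1r; congr (ev _ b).
  by rewrite (Hi_sym xc) dmulC // dmulA // [dmul (dinv x) x]dmulC // dmulV // dmul1.
rewrite (reindex_inj dinv_inj) /=.
under eq_bigl do rewrite dinv_eqc.
under eq_bigr do rewrite dinvK //.
rewrite (sum_i (fun y => ev y b)) sum_neq sum_ev // ev_d1.
by field; rewrite m_neq0.
Qed.

Lemma L3 a : J a (a^-1)%g = delta a - ev c a / #|gT|%:R.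
Proof.
apply: (mulfI m_neq0); rewrite -sumJ.
transitivity (\sum_(x | x != c) ev x a).
  apply: eq_bigr => x xc; rewrite ev_invg //; evs; fld.
rewrite sum_neq sum_ev //.
by field; rewrite m_neq0.
Qed.

End ISection.

Lemma delta1 (gT : finGroupType) : delta (1%g : gT) = 1.
Proof. by rewrite /delta eqxx. Qed.
Lemma deltaN (gT : finGroupType) (x : gT) : x != 1%g -> delta x = 0.
Proof. by move=> /negPf; rewrite /delta => ->. Qed.
Lemma deltaV (gT : finGroupType) (x : gT) : delta (x^-1)%g = delta x.
Proof. by rewrite /delta invg_eq1. Qed.

Ltac fin := repeat match goal with H : is_true (?x != 1%g) |- _ => revert H end;
  rewrite ?mulgV ?mulVg ?invgK ?mul1g ?mulg1 ?invg1 ?invg_eq1 ?deltaV ?delta1 ?eqxx //;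
  intros;
  repeat match goal with H : is_true (?x != 1%g) |- context[delta ?x] => rewrite (deltaN H) end.

Lemma final_id (gT : finGroupType) (J : gT -> gT -> algC) (m : algC) (e : gT -> algC)
  (m0 : m != 0) (JA : forall a b, J a b = J b a)
  (JB : forall a b g, Jstar J a b * Jstar J (a * b)%g g
                     = Jstar J a (b * g)%g * Jstar J b g)
  (L1 : forall b, J 1%g b = delta b - m^-1)
  (L3 : forall a, J a (a^-1)%g = delta a - e a / m)
  (Ee : forall a, e (a^-1)%g = e a) (e1 : e 1%g = 1) (a b g : gT) :
  e b * m * delta (a * b)%g + (m * J (a * b)%g g) * (m * J a b)
  = e g * m * delta (b * g)%g + (m * J (b * g)%g a) * (m * J b g).
Proof.
have L2 x : J x 1%g = delta x - m^-1 by rewrite JA L1.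
have L3' x : J (x^-1)%g x = delta x - e x / m by rewrite JA L3.
have HB := JB a b g; rewrite /Jstar in HB.
rewrite (JA (b * g)%g a).
apply/eqP; rewrite -subr_eq0; apply/eqP.
set Da := delta a; set Db := delta b; set Dg := delta g.
set Dab := delta (a * b)%g; set Dbg := delta (b * g)%g.
have -> : e b * m * Dab + m * J (a * b)%g g * (m * J a b) -
  (e g * m * Dbg + m * J a (b * g)%g * (m * J b g)) =
  m ^+ 2 * ((- Da - Db + J a b) * (- Dab - Dg + J (a * b)%g g) -
            (- Da - Dbg + J a (b * g)%g) * (- Db - Dg + J b g)) +
  (m ^+ 2 * ((Dab + Dg) * J a b + (Da + Db) * J (a * b)%g g - (Da + Db) * (Dab + Dg)
     - (Db + Dg) * J a (b * g)%g - (Da + Dbg) * J b g + (Da + Dbg) * (Db + Dg))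
   + m * (e b * Dab - e g * Dbg)) by ring.
rewrite /Da /Db /Dg /Dab /Dbg HB subrr mulr0 add0r {HB}.
rewrite {}/Da {}/Db {}/Dg {}/Dab {}/Dbg.
have [/eqP hab|nab] := eqVneq (a*b)%g 1%g;
have [/eqP hbg|nbg] := eqVneq (b*g)%g 1%g.
all: try (rewrite -eq_invg_mul in hbg; move/eqP: hbg => hg; subst g).
all: try (rewrite -eq_invg_mul in hab; move/eqP: hab => hb; subst b).
all: try (have [ha|na] := eqVneq a 1%g; [subst a|]).
all: try (have [hb|nb] := eqVneq b 1%g; [subst b|]).
all: try (have [hg|ng] := eqVneq g 1%g; [subst g|]).
all: fin; rewrite ?L1 ?L2 ?L3 ?L3' ?Ee ?e1; fin.
all: by field.
Qed.

Theorem mainTheorem11 (gT : finGroupType) (Mab : abelian [set: gT])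
  (J : gT -> gT -> algC) (HJ : is_Jacobi J)
  (c : Dual gT) (Hc : dmul c c = d1 gT)
  (i : Dual gT -> Dual gT)
  (Hi_range : forall x, x != c -> i x != d1 gT)
  (Hi_inj : {in [pred x | x != c] &, injective i})
  (Hi_surj : forall y, y != d1 gT -> exists2 x, x != c & i x = y)
  (Hi_sym : forall x, x != c -> i x = dmul x (i (dinv x)))
  (HJi : forall a b : gT,
      J a b = (#|gT|%:R)^-1 *
        \sum_(x : Dual gT | x != c) ev (i x) a * ev (dmul (i x) (dinv x)) b) :
  forall a b g : gT,
    \sum_(x : Dual gT) \sum_(y : Dual gT) \sum_(z : Dual gT |
        oplus c i (oplus c i (Some x) (Some y)) (Some z) == Some (d1 gT))
       ev x a * ev y b * ev z g
  = \sum_(x : Dual gT) \sum_(y : Dual gT) \sum_(z : Dual gT |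
        oplus c i (Some x) (oplus c i (Some y) (Some z)) == Some (d1 gT))
       ev x a * ev y b * ev z g.
Proof.
move=> a b g.
case: HJ => JA JB _.
have -> : \sum_(x : Dual gT) \sum_(y : Dual gT) \sum_(z : Dual gT |
        oplus c i (Some x) (oplus c i (Some y) (Some z)) == Some (d1 gT))
       ev x a * ev y b * ev z g =
  \sum_(y : Dual gT) \sum_(z : Dual gT) ev y b * ev z g *
    \sum_(x | oplus c i (oplus c i (Some y) (Some z)) (Some x) == Some (d1 gT)) ev x a.
  under eq_bigr do under eq_bigr do rewrite big_mkcond.
  rewrite exchange_big /=; under eq_bigr do rewrite exchange_big /=.
  apply: eq_bigr => y _; apply: eq_bigr => z _; rewrite big_distrr [RHS]big_mkcond /=.
  apply: eq_bigr => x _; rewrite oplus_comm //.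
  by case: ifP => _; rewrite ?mulr0 //; ring.
under eq_bigr do under eq_bigr do rewrite -big_distrr.
rewrite !key // !(sumJ HJi).
apply: final_id.
- exact: m_neq0.
- exact: JA.
- exact: JB.
- by move=> t; rewrite (L1 Mab Hc Hi_range Hi_inj Hi_surj Hi_sym HJi).
- by move=> t; rewrite (L3 Mab HJi).
- by move=> t; rewrite (evc_inv Mab Hc).
- exact: ev_g1.
Qed.
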